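(* Let $s\ge 1$, $q=2^s$, and let $k,n$ be integers with $n\ge 2k\ge 2$. Let $g(X)=X^k+c_{k-1}X^{k-1}+\dots+c_1X+c_0\in\mathbb{F}_q[X]$ be a monic polynomial of degree $k$ dividing $X^n-1$, and suppose the cyclic code of length $n$ over $\mathbb{F}_q$ generated by $g(X)$ (the set of polynomials of degree $<n$ that are multiples of $g$, viewed as vectors of coefficients, which is an $[n,n-k]_q$ code) is MDS. Let $C=\mathsf{Companion}(c_0,\dots,c_{k-1})$. Then the matrix $C^k$ is MDS.
   Context: For $c_0,\dots,c_{k-1}\in\mathbb{F}_q$, $\mathsf{Companion}(c_0,\dots,c_{k-1})$ denotes the $k\times k$ matrix whose first $k-1$ rows are $e_2,e_3,\dots,e_k$ (ones on the superdiagonal, zeros elsewhere) and whose last row is $(c_0,c_1,\dots,c_{k-1})$. A linear code over $\mathbb{F}_q$ of length $n$ and dimension $k'$ is MDS if its minimal Hamming distance equals $n-k'+1$. A $k\times k$ matrix $M$ over $\mathbb{F}_q$ is called MDS if the $k\times 2k$ matrix $[I_k\mid M]$ generates an MDS code of length $2k$ and dimension $k$ (equivalently, minimal distance $k+1$). *)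

(* Defs.v *)
From HB Require Import structures.
From mathcomp Require Import all_boot all_order all_algebra all_field.
Set Implicit Arguments. Unset Strict Implicit. Unset Printing Implicit Defensive.
Import GRing.Theory.
Local Open Scope ring_scope.

Definition hamming_dist (F : eqType) (n : nat) (u v : 'rV[F]_n) : nat :=
  #|[set i : 'I_n | u 0 i != v 0 i]|.

Definition min_dist_eq (F : eqType) (n : nat) (C : pred 'rV[F]_n) (d : nat) : Prop :=
  (forall u v, C u -> C v -> u != v -> (d <= hamming_dist u v)%N) /\
  (exists u v, [/\ C u, C v, u != v & hamming_dist u v = d]).

Definition MDS_code (F : eqType) (n : nat) (C : pred 'rV[F]_n) (k' : nat) : Prop :=
  min_dist_eq C (n - k' + 1).

Definition code_of (F : fieldType) (m n : nat) (G : 'M[F]_(m, n)) : pred 'rV[F]_n :=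
  [pred c : 'rV[F]_n | (c <= G)%MS].

Definition MDS_matrix (F : fieldType) (k : nat) (M : 'M[F]_k) : Prop :=
  MDS_code (code_of (row_mx (1%:M : 'M[F]_k) M)) k.

Definition Companion (F : fieldType) (k : nat) (c : 'I_k -> F) : 'M[F]_k :=
  \matrix_(i < k, j < k) if (i.+1 < k)%N then ((j : nat) == i.+1)%:R else c j.

Definition monic_of (F : fieldType) (k : nat) (c : 'I_k -> F) : {poly F} :=
  'X^k + \sum_(i < k) c i *: 'X^i.

Definition cyclic_code (F : fieldType) (n : nat) (g : {poly F}) : pred 'rV[F]_n :=
  [pred v : 'rV[F]_n | g %| \sum_(i < n) v 0 i *: 'X^i].

(* Main.v *)
Require Import Defs.
From HB Require Import structures.
From mathcomp Require Import all_boot all_order all_algebra all_field.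
Set Implicit Arguments. Unset Strict Implicit. Unset Printing Implicit Defensive.
Import GRing.Theory.
Local Open Scope ring_scope.
Section S.
Variable F : fieldType.

Definition pv (k : nat) (v : 'rV[F]_k) : {poly F} := \sum_(i < k) v 0 i *: 'X^i.

Lemma coef_pv k (v : 'rV[F]_k.+1) j :
  (pv v)`_j = if (j < k.+1)%N then v 0 (inord j) else 0.
Proof.
rewrite /pv coef_sum.
under eq_bigr => i _ do rewrite coefZ coefXn.
case: ifP => hj.
  rewrite (bigD1 (inord j)) //= inordK // eqxx mulr1 big1 ?addr0 // => i hi.
  case: eqP => [ej|]; last by rewrite mulr0.
  by case/eqP: hi; apply/val_inj; rewrite /= inordK // ej.
apply: big1 => i _; case: eqP => [ej|]; last by rewrite mulr0.
by move: (ltn_ord i); rewrite -ej hj.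
Qed.

Lemma pv_mul k m (u : 'rV[F]_k) (A : 'M[F]_(k, m)) :
  pv (u *m A) = \sum_(l < k) u 0 l *: pv (row l A).
Proof.
rewrite /pv.
under eq_bigr => j _ do rewrite mxE scaler_suml.
rewrite exchange_big /=; apply: eq_bigr => l _.
rewrite scaler_sumr; apply: eq_bigr => j _.
by rewrite mxE scalerA.
Qed.

End S.

Lemma pv_rowC (F : fieldType) k (c : 'I_k.+1 -> F) (l : 'I_k.+1) :
  pv (row l (Companion c)) =
  if (l.+1 < k.+1)%N then 'X^(l.+1) else monic_of c - 'X^(k.+1).
Proof.
rewrite /pv /monic_of [X in X - _]addrC addrK.
under eq_bigr => j _ do rewrite !mxE.
case: ifP => hl; last by [].
rewrite (bigD1 (Ordinal hl)) //= eqxx scale1r big1 ?addr0 // => j hj.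
case: eqP => [ej|]; last by rewrite scale0r.
by case/eqP: hj; apply/val_inj.
Qed.

Lemma pv_C (F : fieldType) k (c : 'I_k.+1 -> F) (v : 'rV[F]_k.+1) :
  2%:R = 0 :> F ->
  pv (v *m Companion c) = 'X * pv v + v 0 ord_max *: monic_of c.
Proof.
move=> h2.
rewrite pv_mul big_ord_recr /= pv_rowC /= ltnn.
under eq_bigr => i _ do rewrite pv_rowC /= ltnS ltn_ord.
rewrite /pv big_distrr big_ord_recr /=.
under [in RHS]eq_bigr => i _ do rewrite -scalerAr -exprS.
rewrite -scalerAr -exprS scalerBr addrA.
have ha : - v 0 ord_max = v 0 ord_max.
  by apply/eqP; rewrite eq_sym -subr_eq0 opprK -mulr2n -mulr_natr h2 mulr0.
by rewrite -scaleNr ha -!addrA [X in _ + X = _]addrC.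
Qed.

Lemma pv_Cn (F : fieldType) k (c : 'I_k.+1 -> F) :
  2%:R = 0 :> F -> forall j (v : 'rV[F]_k.+1),
  monic_of c %| pv (v *m Companion c ^+ j) - 'X^j * pv v.
Proof.
move=> h2; elim=> [|j IH] v.
  by rewrite expr0 mulmx1 expr0 mul1r subrr dvdp0.
rewrite exprS -mulmxE mulmxA.
have -> : pv (v *m Companion c *m Companion c ^+ j) - 'X^(j.+1) * pv v =
  (pv (v *m Companion c *m Companion c ^+ j) - 'X^j * pv (v *m Companion c))
  + 'X^j * (pv (v *m Companion c) - 'X * pv v).
  by rewrite mulrBr mulrA -exprSr addrA subrK.
rewrite dvdp_add // dvdp_mull // pv_C // addrC addKr -mul_polyC dvdp_mull //.
Qed.

Definition wt (F : fieldType) m (r : 'rV[F]_m) := #|[set i | r 0 i != 0]|.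

Lemma wt_sum (F : fieldType) m (r : 'rV[F]_m) : wt r = \sum_(i < m) (r 0 i != 0 : nat).
Proof.
rewrite /wt -sum1_card big_mkcond /=; apply: eq_bigr => i _.
by rewrite inE; case: (r 0 i != 0).
Qed.

Lemma wt_row (F : fieldType) m1 m2 (a : 'rV[F]_m1) (b : 'rV[F]_m2) :
  wt (row_mx a b) = (wt a + wt b)%N.
Proof.
rewrite !wt_sum big_split_ord /=.
by congr (_ + _)%N; apply: eq_bigr => i _; rewrite ?row_mxEl ?row_mxEr.
Qed.

Lemma hd_wt (F : fieldType) m (x y : 'rV[F]_m) : hamming_dist x y = wt (x - y).
Proof.
rewrite /hamming_dist /wt; apply: eq_card => i; rewrite !inE !mxE.
by rewrite subr_eq0.
Qed.

Lemma wt0 (F : fieldType) m : wt (0 : 'rV[F]_m) = 0%N.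
Proof. by rewrite wt_sum big1 // => i _; rewrite mxE eqxx. Qed.

Lemma wt_gt0 (F : fieldType) m (u : 'rV[F]_m) : u != 0 -> (0 < wt u)%N.
Proof.
move=> hu; have [i hi] : exists i, u 0 i != 0.
  apply/existsP; apply: contraR hu => /existsPn h; apply/eqP/rowP => i.
  by rewrite mxE; move/negbNE/eqP: (h i).
by rewrite /wt card_gt0; apply/set0Pn; exists i; rewrite inE.
Qed.

Lemma key (F : fieldType) k n (c : 'I_k.+1 -> F) :
  2%:R = 0 :> F -> (k.+1 + k.+1 <= n)%N ->
  (forall w : 'rV[F]_n, cyclic_code (monic_of c) w -> w != 0 -> (k.+2 <= wt w)%N) ->
  forall u : 'rV[F]_k.+1, u != 0 ->
  (k.+2 <= wt u + wt (u *m Companion c ^+ k.+1))%N.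
Proof.
move=> h2 hn hyp u hu.
set K := k.+1; set M := Companion c ^+ K.
set P := pv (u *m M) - 'X^K * pv u.
have hP : monic_of c %| P by apply: pv_Cn.
have coefP : forall j, P`_j = (if (j < K)%N then (u *m M) 0 (inord j) else 0) -
   (if (j < K)%N then 0 else if (j - K < K)%N then u 0 (inord (j - K)) else 0).
  by move=> j; rewrite coefB coefXnM !coef_pv.
have hKn : (K <= n)%N by apply: leq_trans hn; apply: leq_addr.
have P0 : forall j, (K + K <= j)%N -> P`_j = 0.
  move=> j hj; rewrite coefP.
  have h1 : (j < K)%N = false by apply/negbTE; rewrite -leqNgt; apply: leq_trans hj; apply: leq_addr.
  have h3 : (j - K < K)%N = false by apply/negbTE; rewrite -leqNgt leq_subRL // ?addnC //; apply: leq_trans hj; apply: leq_addr.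
  by rewrite h1 h3 subrr.
have sizeP : (size P <= n)%N.
  by apply/leq_sizeP => j hj; apply: P0; apply: leq_trans hj.
set w := \row_(i < n) P`_i.
have hw : cyclic_code (monic_of c) w.
  rewrite /cyclic_code /=.
  under eq_bigr => i _ do rewrite mxE.
  rewrite -poly_def.
  have -> : \poly_(i < n) P`_i = P; last by [].
  apply/polyP => j; rewrite coef_poly; case: ltnP => // hj.
  by rewrite nth_default // (leq_trans sizeP hj).
have hwt : wt w = (wt u + wt (u *m M))%N.
  rewrite wt_sum.
  under eq_bigr => i _ do rewrite mxE.
  rewrite -(big_mkord xpredT (fun i => (P`_i != 0 : nat))).
  rewrite (big_cat_nat (leq0n K) hKn) (big_cat_nat (leq_addr K K) hn) /=.
  have -> : \sum_(K + K <= i < n) (P`_i != 0 : nat) = 0%N.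
    by rewrite big_nat_cond big1 // => i /andP[/andP[hi _] _]; rewrite P0 ?eqxx.
  rewrite addr0.
  rewrite addnC; congr (_ + _).
    rewrite wt_sum (eq_bigr (fun i : 'I_K => ((u *m M) 0 (inord i) != 0 : nat))); last first.
      by move=> i _; rewrite inord_val.
    rewrite -(big_mkord xpredT (fun i => ((u *m M) 0 (inord i) != 0 : nat))).
    apply: eq_big_nat => i /andP[_ hi].
    by rewrite coefP hi subr0.
  rewrite -{1}(add0n K) big_addn addnK.
  rewrite wt_sum (eq_bigr (fun i : 'I_K => (u 0 (inord i) != 0 : nat))); last first.
    by move=> i _; rewrite inord_val.
  rewrite -(big_mkord xpredT (fun i => (u 0 (inord i) != 0 : nat))).
  apply: eq_big_nat => i /andP[_ hi].
  by rewrite coefP addnK hi ltnNge leq_addl /= sub0r oppr_eq0.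
rewrite -hwt; apply: hyp => //.
apply: contraTneq (wt_gt0 hu) => w0.
by move: hwt; rewrite w0 wt0 => /esym /eqP; rewrite addn_eq0 => /andP[/eqP -> _].
Qed.

Theorem mainTheorem1 (F : finFieldType) (s k n : nat) (c : 'I_k -> F) :
  (1 <= s)%N -> #|F| = (2 ^ s)%N ->
  (1 <= k)%N -> (2 * k <= n)%N ->
  monic_of c %| 'X^n - 1 ->
  MDS_code (@cyclic_code F n (monic_of c)) (n - k) ->
  MDS_matrix (Companion c ^+ k).
Proof.
move=> hs hF hk hn hdiv hmds.
have h2 : 2%:R = 0 :> F by apply: pcharf0; apply: (card_finPcharP hF).
case: k c hk hn hdiv hmds => [//|k] c _ hn _ hmds.
have hn' : (k.+1 + k.+1 <= n)%N by rewrite addnn -mul2n.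
have hKn : (k.+1 <= n)%N by apply: leq_trans hn'; apply: leq_addr.
case: hmds => H1 _.
have hyp : forall w : 'rV[F]_n, cyclic_code (monic_of c) w -> w != 0 -> (k.+2 <= wt w)%N.
  move=> w hw w0.
  have h0 : cyclic_code (monic_of c) (0 : 'rV[F]_n).
    by rewrite /cyclic_code /= big1 ?dvdp0 // => i _; rewrite mxE scale0r.
  by have := H1 w 0 hw h0 w0; rewrite hd_wt subr0 subKn ?addn1.
have hK := key h2 hn' hyp.
rewrite /MDS_matrix /MDS_code /min_dist_eq addnK addn1.
set M := Companion c ^+ k.+1.
split.
  move=> x y; rewrite /code_of /= => /submxP[Dx ->] /submxP[Dy ->] hxy.
  rewrite hd_wt -mulmxBl mul_mx_row mulmx1 wt_row; apply: hK.
  by apply: contraNneq hxy => h0; rewrite -subr_eq0 -mulmxBl h0 mul0mx.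
set e : 'rV[F]_k.+1 := delta_mx 0 ord0.
have e0 : e != 0.
  apply/eqP => h; have := congr1 (fun r : 'rV[F]_k.+1 => r 0 ord0) h.
  by rewrite !mxE eqxx /= => /eqP; rewrite oner_eq0.
exists (row_mx e (e *m M)), 0; split.
- by rewrite /code_of /= -[e in row_mx e _]mulmx1 -mul_mx_row submxMl.
- by rewrite /code_of /= sub0mx.
- apply: contra_neq e0 => h; have := congr1 (@lsubmx F 1 k.+1 k.+1) h.
  by rewrite row_mxKl linear0.
rewrite hd_wt subr0 wt_row; apply/eqP; rewrite eqn_leq hK // andbT.
have -> : k.+2 = (1 + k.+1)%N by [].
apply: leq_add.
  apply: (@leq_trans #|[set (ord0 : 'I_k.+1)]|); last by rewrite cards1.
  apply: subset_leq_card; apply/subsetP => i.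
  by rewrite !inE mxE eqxx /=; case: (i == ord0); rewrite ?eqxx.
by rewrite /wt; apply: leq_trans (max_card _) _; rewrite card_ord.
Qed.
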